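(* For any $n\in\mathbb{N}$ and $A>0$, there exists $f\in C^2[-1,1]$ with $f\le0$ on $[-1,0]$ and $f\ge0$ on $[0,1]$, such that every algebraic polynomial $P_n$ of degree $\le n$ with $P_n\le0$ on $[-1,0]$, $P_n\ge0$ on $[0,1]$ and $P_n^{(i)}(0)=f^{(i)}(0)$ for $i=0,1$ obeys $$\|f-P_n\|>A\,\omega_4(f'',1).$$
   Context: $\|\cdot\|$ is the sup norm on $[-1,1]$; $\omega_4(g,t)$ is the fourth modulus of smoothness of $g$ on $[-1,1]$. *)

(* Defs.v *)
From Stdlib Require Import Reals.
From Coquelicot Require Import Coquelicot.
Open Scope R_scope.

Definition I11 (x : R) : Prop := -1 <= x <= 1.

Definition has_deriv_on_I11 (g dg : R -> R) : Prop :=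
  forall x, I11 x ->
    limit1_in (fun y => (g y - g x) / (y - x)) (fun y => I11 y /\ y <> x) (dg x) x.

Definition cont_on_I11 (g : R -> R) : Prop :=
  forall x, I11 x -> limit1_in g I11 (g x) x.

Definition C2_I11 (f f1 f2 : R -> R) : Prop :=
  has_deriv_on_I11 f f1 /\ has_deriv_on_I11 f1 f2 /\ cont_on_I11 f2.

Definition supnorm (g : R -> R) : Rbar :=
  Lub_Rbar (fun y => exists x, I11 x /\ y = Rabs (g x)).

Definition delta4 (g : R -> R) (h x : R) : R :=
  g x - 4 * g (x + h) + 6 * g (x + 2 * h) - 4 * g (x + 3 * h) + g (x + 4 * h).

Definition omega4 (g : R -> R) (t : R) : Rbar :=
  Lub_Rbar (fun y => exists h x, 0 < h <= t /\ I11 x /\ I11 (x + 4 * h)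
                                 /\ y = Rabs (delta4 g h x)).

Definition poly_eval (n : nat) (c : nat -> R) (x : R) : R :=
  sum_f_R0 (fun k => c k * x ^ k) n.

(* Main.v *)
Require Import Defs.
From Stdlib Require Import Reals Lra Lia.
From Coquelicot Require Import Coquelicot.
Open Scope R_scope.

Lemma poly_eval_S n c x : poly_eval (S n) c x = poly_eval n c x + c (S n) * x ^ (S n).
Proof. reflexivity. Qed.

Lemma poly_eval_one n c : poly_eval n c 1 = sum_f_R0 c n.
Proof. unfold poly_eval; apply sum_eq; intros; rewrite pow1; ring. Qed.

Lemma sum_abs_le n (a : nat -> R) B : (forall k, (k <= n)%nat -> Rabs (a k) <= B) ->
  Rabs (sum_f_R0 a n) <= B * INR (S n).
Proof.
  intros H. eapply Rle_trans; [apply Rsum_abs|]. rewrite <- sum_cte. apply sum_Rle. auto.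
Qed.

Lemma dil_sum n r a x : sum_f_R0 (fun k => r k * (a / 2 ^ k - 1) * x ^ k) n =
  a * poly_eval n r (x / 2) - poly_eval n r x.
Proof.
  unfold poly_eval. induction n as [|n IH]; simpl sum_f_R0.
  - simpl. field.
  - rewrite IH. unfold Rdiv. rewrite Rpow_mult_distr, pow_inv.
    assert (2 ^ S n <> 0) by (apply pow_nonzero; lra). field. apply pow_nonzero; lra.
Qed.

Lemma coef_bound : forall N, exists K, 0 < K /\ forall r D,
  (forall x, -1 <= x <= 1 -> Rabs (poly_eval N r x) <= D) ->
  forall k, (k <= N)%nat -> Rabs (r k) <= K * D.
Proof.
  induction N as [|n IH].
  - exists 1. split; [lra|]. intros r D H k Hk. assert (k = 0%nat) by lia. subst.
    specialize (H 0 ltac:(lra)). unfold poly_eval in H. simpl in H. rewrite Rmult_1_r in H. lra.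
  - destruct IH as [K [HK IH]].
    set (a := 2 ^ S n).
    assert (Ha : 2 <= a). { unfold a. simpl. assert (1 <= 2 ^ n) by (apply pow_R1_Rle; lra). lra. }
    set (K' := K * (a + 1)).
    assert (HK' : 0 < K') by (unfold K'; apply Rmult_lt_0_compat; lra).
    exists (K' * INR (S n) + 1 + K'). split.
    { assert (0 <= INR (S n)) by apply pos_INR. nra. }
    intros r D H.
    assert (HD : 0 <= D) by (specialize (H 0 ltac:(lra)); eapply Rle_trans; [apply Rabs_pos|exact H]).
    assert (Hlow : forall k, (k <= n)%nat -> Rabs (r k) <= K' * D).
    { intros k Hk.
      set (r' := fun k => r k * (a / 2 ^ k - 1)).
      assert (Hq : forall x, -1 <= x <= 1 -> Rabs (poly_eval n r' x) <= (a + 1) * D).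
      { intros x Hx. unfold poly_eval, r'.
        replace (sum_f_R0 (fun k0 => r k0 * (a / 2 ^ k0 - 1) * x ^ k0) n)
          with (a * poly_eval (S n) r (x/2) - poly_eval (S n) r x).
        2:{ rewrite <- (dil_sum (S n) r a x). rewrite tech5.
            assert (E0 : a / 2 ^ S n - 1 = 0) by (unfold a; field; apply pow_nonzero; lra).
            rewrite E0. ring. }
        assert (H1 := H x Hx). assert (H2 := H (x/2) ltac:(lra)).
        eapply Rle_trans; [apply Rabs_triang|]. rewrite Rabs_Ropp, Rabs_mult, (Rabs_right a) by lra.
        nra. }
      specialize (IH r' _ Hq k Hk). unfold r' in IH. rewrite Rabs_mult in IH.
      assert (Hf : 1 <= a / 2 ^ k - 1).
      { unfold a. replace (S n) with (k + (S n - k))%nat by lia. rewrite pow_add.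
        assert (0 < 2 ^ k) by (apply pow_lt; lra).
        assert (2 <= 2 ^ (S n - k)). { destruct (S n - k)%nat eqn:E. lia. simpl. assert (1 <= 2 ^ n0) by (apply pow_R1_Rle; lra). lra. }
        replace (2 ^ k * 2 ^ (S n - k) / 2 ^ k) with (2 ^ (S n - k)) by (field; lra). lra. }
      rewrite (Rabs_right (a / 2 ^ k - 1)) in IH by lra. unfold K'.
      assert (0 <= Rabs (r k)) by apply Rabs_pos. nra. }
    intros k Hk. destruct (Compare_dec.le_lt_dec k n) as [Hkn|Hkn].
    + assert (0 <= INR (S n)) by apply pos_INR. specialize (Hlow k Hkn).
      assert (0 <= K' * INR (S n) * D) by (apply Rmult_le_pos; [apply Rmult_le_pos|]; lra). nra.
    + assert (k = S n) by lia. subst k.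
      assert (H1 := H 1 ltac:(lra)). rewrite poly_eval_one in H1. simpl sum_f_R0 in H1.
      assert (Hs := sum_abs_le n r (K' * D) Hlow).
      replace (r (S n)) with (sum_f_R0 r n + r (S n) - sum_f_R0 r n) by ring.
      eapply Rle_trans; [apply Rabs_triang|]. rewrite Rabs_Ropp. nra.
Qed.

Lemma poly_eval_0 N c : poly_eval N c 0 = c 0%nat.
Proof. unfold poly_eval. induction N as [|N IH]; simpl sum_f_R0. simpl; ring. rewrite IH. simpl; ring. Qed.

Lemma poly_deriv0 N c : is_derive (poly_eval (S N) c) 0 (c 1%nat).
Proof.
  induction N as [|N IH].
  - apply (is_derive_ext (fun x => c 0%nat + c 1%nat * x)).
    { intros t. unfold poly_eval. simpl. ring. }
    auto_derive; auto; ring.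
  - apply (is_derive_ext (fun x => poly_eval (S N) c x + c (S (S N)) * x ^ (S (S N)))).
    { intros t. reflexivity. }
    replace (c 1%nat) with (c 1%nat + 0) by ring.
    apply (is_derive_plus (poly_eval (S N) c)); auto.
    auto_derive; auto. simpl. ring.
Qed.

Definition trunc (n : nat) (c : nat -> R) k := if Nat.leb k n then c k else 0.

Lemma trunc_eval n c j x : poly_eval (n + j) (trunc n c) x = poly_eval n c x.
Proof.
  induction j as [|j IH].
  - rewrite Nat.add_0_r. unfold poly_eval. apply sum_eq. intros i Hi. unfold trunc.
    rewrite (proj2 (Nat.leb_le i n) Hi). ring.
  - rewrite Nat.add_succ_r, poly_eval_S, IH. unfold trunc.
    rewrite (proj2 (Nat.leb_gt (S (n + j)) n)) by lia. ring.
Qed.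

Definition Fc (M : R) (k : nat) : R :=
  match k with 3%nat => - M | 5%nat => 1 | _ => 0 end.

Lemma Fc_eval M j x : poly_eval (5 + j) (Fc M) x = x ^ 5 - M * x ^ 3.
Proof.
  induction j as [|j IH].
  - unfold poly_eval. simpl. ring.
  - rewrite Nat.add_succ_r, poly_eval_S, IH. simpl Fc. ring.
Qed.

Lemma pow_le1_4 x k : 0 <= x <= 1 -> (4 <= k)%nat -> x ^ k <= x ^ 4.
Proof.
  intros Hx Hk. replace k with (4 + (k - 4))%nat by lia. rewrite pow_add.
  assert (x ^ (k - 4) <= 1). { rewrite <- (pow1 (k-4)). apply pow_incr. lra. }
  assert (0 <= x ^ 4) by (apply pow_le; lra). assert (0 <= x ^ (k-4)) by (apply pow_le; lra). nra.
Qed.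

Lemma odd_part c x j : c 1%nat = 0 -> 0 <= x <= 1 ->
  poly_eval (3 + j) c x - poly_eval (3 + j) c (- x) <=
  2 * c 3%nat * x ^ 3 + 2 * x ^ 4 * sum_f_R0 (fun k => Rabs (c k)) (3 + j).
Proof.
  intros H1 Hx. induction j as [|j IH].
  - change (3+0)%nat with 3%nat.
    assert (0 <= sum_f_R0 (fun k => Rabs (c k)) 3) by (apply cond_pos_sum; intros; apply Rabs_pos).
    assert (0 <= x ^ 4) by (apply pow_le; lra).
    assert (0 <= x ^ 4 * sum_f_R0 (fun k => Rabs (c k)) 3) by (apply Rmult_le_pos; auto).
    replace (poly_eval 3 c x - poly_eval 3 c (-x)) with (2 * c 3%nat * x^3)
      by (unfold poly_eval; simpl; rewrite H1; ring). lra.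
  - rewrite Nat.add_succ_r, !poly_eval_S, tech5.
    set (k := S (3 + j)).
    assert (Hk : x ^ k <= x ^ 4) by (apply pow_le1_4; unfold k; lia + lra).
    assert (Hk' : Rabs ((- x) ^ k) <= x ^ 4).
    { rewrite <- RPow_abs, Rabs_Ropp, Rabs_right by lra. auto. }
    assert (Hk0 : 0 <= x ^ k) by (apply pow_le; lra).
    assert (Hc : Rabs (c k * x ^ k - c k * (- x) ^ k) <= 2 * x ^ 4 * Rabs (c k)).
    { replace (c k * x ^ k - c k * (- x) ^ k) with (c k * (x ^ k - (- x) ^ k)) by ring.
      rewrite Rabs_mult. eapply Rle_trans. apply Rmult_le_compat_l. apply Rabs_pos.
      eapply Rle_trans. apply Rabs_triang. rewrite Rabs_Ropp, (Rabs_right (x ^ k)) by lra.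
      apply Rplus_le_compat; eauto. assert (0 <= Rabs (c k)) by apply Rabs_pos. nra. }
    apply Rabs_le_between' in Hc. 
    fold k in IH |- *. 
    set (S0 := sum_f_R0 (fun k0 => Rabs (c k0)) (3 + j)) in *. lra.
Qed.
Ltac nz := repeat split; repeat match goal with
  | |- _ * _ <> 0 => apply Rmult_integral_contrapositive_currified
  | |- _ ^ _ <> 0 => apply pow_nonzero end; try lra.
Definition ff (M x : R) := x^5 - M*x^3 + M^2*x - M^3 * x/(x^2+M).
Definition ff1 (M x : R) := 5*x^4 - 3*M*x^2 + M^2 - M^3 * (M - x^2)/(x^2+M)^2.
Definition ff2 (M x : R) := 20*x^3 - 6*M*x - M^3 * (2*x^3 - 6*M*x)/(x^2+M)^3.
Lemma d1 M x : 0 < M -> is_derive (ff M) x (ff1 M x).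
Proof. intros HM. assert (0 < x^2 + M) by nra. assert (0 < x*(x*1)+M) by (simpl in H; lra).
  unfold ff, ff1. auto_derive. nz. field. nz. Qed.
Lemma d2 M x : 0 < M -> is_derive (ff1 M) x (ff2 M x).
Proof. intros HM. assert (0 < x^2 + M) by nra. assert (0 < x*(x*1)+M) by (simpl in H; lra).
  unfold ff1, ff2. auto_derive. nz. field. nz. Qed.
Lemma d3 M x : 0 < M -> ex_derive (ff2 M) x.
Proof. intros HM. assert (0 < x^2 + M) by nra. assert (0 < x*(x*1)+M) by (simpl in H; lra).
  unfold ff2. auto_derive. nz. Qed.

Lemma deriv_I11 g dg : (forall x, derivable_pt_lim g x (dg x)) -> has_deriv_on_I11 g dg.
Proof.
  intros H x _ eps Heps. destruct (H x eps Heps) as [del Hd]. exists del. split; [apply cond_pos|].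
  intros y [[_ Hyx] Hdy]. simpl in *. unfold R_dist in *.
  assert (y - x <> 0) by lra.
  specialize (Hd (y - x) H0 Hdy). replace (x + (y - x)) with y in Hd by ring. exact Hd.
Qed.

Lemma cont_I11 g : (forall x, continuity_pt g x) -> cont_on_I11 g.
Proof.
  intros H x _ eps Heps. destruct (H x eps Heps) as [del [Hdel Hd]]. exists del. split; auto.
  intros y [_ Hdy]. destruct (Req_dec x y) as [E|E].
  - subst. simpl. unfold R_dist. rewrite Rminus_diag, Rabs_R0. lra.
  - apply Hd. split; auto. split; auto. exact I.
Qed.

Lemma key_ineq m y : 0 < m -> Rabs (2*y^3 - 6*(m*m)*y) * (m*m)^3 <= 3*m^3 * (y^2+m*m)^3.
Proof.
  intros Hm. set (a := Rabs y).
  assert (Ha : 0 <= a) by apply Rabs_pos.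
  assert (Hy2 : y ^ 2 = a * a). { unfold a. rewrite <- Rabs_mult. rewrite Rabs_right. ring. nra. }
  assert (H1 : Rabs (2*y^3 - 6*(m*m)*y) <= 6 * a * (a*a + m*m)).
  { replace (2*y^3 - 6*(m*m)*y) with (y * (2 * y^2 - 6*(m*m))) by ring.
    rewrite Rabs_mult. fold a. rewrite Hy2.
    assert (Rabs (2 * (a * a) - 6 * (m * m)) <= 6 * (a*a + m*m)).
    { assert (0 <= a*a) by nra. assert (0 <= m*m) by nra. apply Rabs_le. lra. }
    apply Rmult_le_compat_l with (r := a) in H; auto. lra. }
  assert (H2 : 2 * m^3 * a <= (a*a + m*m)^2).
  { assert (0 <= (a - m)*(a-m)) by apply Rle_0_sqr. assert (2*m*a <= a*a + m*m) by nra.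
    assert (m*m <= a*a+m*m) by nra.
    replace (2 * m^3 * a) with ((2*m*a) * (m*m)) by ring.
    replace ((a*a+m*m)^2) with ((a*a+m*m)*(a*a+m*m)) by ring.
    apply Rmult_le_compat; nra. }
  rewrite Hy2.
  assert (0 < m^3) by (apply pow_lt; lra).
  assert (0 <= (m*m)^3) by (apply pow_le; nra).
  eapply Rle_trans. apply Rmult_le_compat_r; [auto|exact H1].
  replace (6 * a * (a * a + m * m) * (m * m) ^ 3) with (3 * m^3 * (a*a+m*m) * (2 * m^3 * a)) by ring.
  replace (3 * m ^ 3 * (a * a + m * m) ^ 3) with (3 * m^3 * (a*a+m*m) * (a*a+m*m)^2) by ring.
  apply Rmult_le_compat_l; auto. assert (0 <= a*a) by nra. nra.
Qed.

Lemma e_bound m y : 0 < m -> Rabs (ff2 (m*m) y - (20*y^3 - 6*(m*m)*y)) <= 3 * m^3.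
Proof.
  intros Hm. assert (HQ0 : 0 < y^2 + m*m) by nra. assert (HQ : 0 < (y^2 + m*m)^3) by (apply pow_lt; nra).
  replace (ff2 (m*m) y - (20*y^3 - 6*(m*m)*y)) with (- ((2*y^3 - 6*(m*m)*y) * (m*m)^3 / (y^2+m*m)^3)).
  2:{ unfold ff2. field. nz. }
  rewrite Rabs_Ropp, Rabs_div by lra. rewrite Rabs_mult, (Rabs_right ((y^2+m*m)^3)) by lra.
  rewrite (Rabs_right ((m*m)^3)) by (apply Rle_ge, pow_le; nra).
  apply Rle_div_l; auto. apply key_ineq; auto.
Qed.

Lemma delta4_bound m h x : 0 < m -> Rabs (delta4 (ff2 (m*m)) h x) <= 48 * m^3.
Proof.
  intros Hm. set (q := fun y => 20*y^3 - 6*(m*m)*y).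
  set (e := fun y => ff2 (m*m) y - q y).
  assert (E : delta4 (ff2 (m*m)) h x = e x - 4 * e (x+h) + 6 * e (x + 2*h) - 4 * e (x+3*h) + e (x+4*h)).
  { unfold delta4, e, q. ring. }
  rewrite E. assert (Hb : forall y, - (3*m^3) <= e y <= 3 * m^3).
  { intros y. apply Rabs_le_between. apply e_bound; auto. }
  pose proof (Hb x). pose proof (Hb (x+h)). pose proof (Hb (x+2*h)). pose proof (Hb (x+3*h)). pose proof (Hb (x+4*h)).
  apply Rabs_le. lra.
Qed.

Lemma ff_form M x : 0 < M -> ff M x = x * ((x^3)^2 / (x^2 + M)).
Proof. intros HM. assert (0 < x^2+M) by nra. unfold ff. field. lra. Qed.

Lemma ff_F M x : 0 < M -> ff M x - (x^5 - M*x^3) = M^2 * (x^3 / (x^2+M)).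
Proof. intros HM. assert (0 < x^2+M) by nra. unfold ff. field. lra. Qed.

Lemma E_bound M x : 0 < M -> -1 <= x <= 1 -> Rabs (M^2 * (x^3 / (x^2+M))) <= M^2.
Proof.
  intros HM Hx. assert (0 < x^2+M) by nra.
  rewrite Rabs_mult, Rabs_right by (apply Rle_ge, pow_le; lra).
  rewrite Rabs_div by lra. rewrite (Rabs_right (x^2+M)) by lra.
  assert (Rabs (x^3) <= x^2 + M).
  { replace (x^3) with (x * x^2) by ring. rewrite Rabs_mult, (Rabs_right (x^2)) by (apply Rle_ge, pow2_ge_0).
    assert (Rabs x <= 1) by (apply Rabs_le; lra). assert (0 <= x^2) by apply pow2_ge_0.
    assert (0 <= Rabs x) by apply Rabs_pos. nra. }
  assert (Rabs (x^3) / (x^2+M) <= 1). { apply Rle_div_l; lra. }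
  assert (0 <= M^2) by (apply pow_le; lra). nra.
Qed.

Lemma Fc_abs M k : 0 <= M <= 1 -> Rabs (Fc M k) <= 1.
Proof.
  intros HM. destruct k as [|[|[|[|[|[|k]]]]]]; simpl; rewrite ?Rabs_R0, ?Rabs_R1; try lra.
  rewrite Rabs_Ropp, Rabs_right; lra.
Qed.

Theorem lemma3p11 :
  forall (n : nat) (A : R), 0 < A ->
  exists f f1 f2 : R -> R,
    C2_I11 f f1 f2 /\
    (forall x, -1 <= x <= 0 -> f x <= 0) /\
    (forall x, 0 <= x <= 1 -> 0 <= f x) /\
    forall c : nat -> R,
      (forall x, -1 <= x <= 0 -> poly_eval n c x <= 0) ->
      (forall x, 0 <= x <= 1 -> 0 <= poly_eval n c x) ->
      poly_eval n c 0 = f 0 ->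
      derivable_pt_lim (poly_eval n c) 0 (f1 0) ->
      Rbar_lt (Rbar_mult (Finite A) (omega4 f2 1))
              (supnorm (fun x => f x - poly_eval n c x)).
Proof.
  intros n A HA.
  set (N := (5 + n)%nat).
  destruct (coef_bound N) as [K [HK HKb]].
  set (t := K * (48 * A + 1)).
  assert (Ht : 0 < t) by (unfold t; apply Rmult_lt_0_compat; lra).
  set (m := / (2 + 4 * t)).
  assert (Hm : 0 < m) by (unfold m; apply Rinv_0_lt_compat; lra).
  assert (Hm1 : m <= 1). { unfold m. rewrite <- Rinv_1. apply Rinv_le_contravar; lra. }
  assert (Hmt : m * (2 + 4 * t) = 1) by (unfold m; field; lra).
  set (M := m * m).
  assert (HM : 0 < M) by (unfold M; nra).
  assert (HM1 : M <= 1) by (unfold M; nra).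
  exists (ff M), (ff1 M), (ff2 M).
  split; [|split; [|split]].
  - split; [|split].
    + apply deriv_I11. intros x. apply is_derive_Reals. apply d1; auto.
    + apply deriv_I11. intros x. apply is_derive_Reals. apply d2; auto.
    + apply cont_I11. intros x. apply derivable_continuous_pt. apply ex_derive_Reals_0. apply d3; auto.
  - intros x Hx. rewrite ff_form by auto. assert (0 < x^2+M) by nra.
    assert (0 <= (x^3)^2 / (x^2+M)) by (apply Rdiv_le_0_compat; [apply pow2_ge_0|lra]). nra.
  - intros x Hx. rewrite ff_form by auto. assert (0 < x^2+M) by nra.
    assert (0 <= (x^3)^2 / (x^2+M)) by (apply Rdiv_le_0_compat; [apply pow2_ge_0|lra]). nra.
  - intros c Hneg Hpos H0 Hd.
    apply Rbar_not_le_lt. intro Hle.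
    set (D := A * (48 * m^3)).
    assert (Hom : Rbar_le (omega4 (ff2 M) 1) (Finite (48 * m^3))).
    { unfold omega4. apply (proj2 (Lub_Rbar_correct _)). intros y [h [x [_ [_ [_ Hy]]]]].
      subst y. simpl. apply delta4_bound; auto. }
    assert (Hom0 : Rbar_le (Finite 0) (omega4 (ff2 M) 1)).
    { unfold omega4. eapply Rbar_le_trans; [|apply (proj1 (Lub_Rbar_correct _))].
      2:{ exists (1/4), (-1). split; [lra|]. split; [unfold I11; lra|]. split; [unfold I11; lra|]. reflexivity. }
      simpl. apply Rabs_pos. }
    assert (HD : forall x, -1 <= x <= 1 -> Rabs (ff M x - poly_eval n c x) <= D).
    { intros x Hx.
      assert (H1 : Rbar_le (Finite (Rabs (ff M x - poly_eval n c x))) (supnorm (fun x => ff M x - poly_eval n c x))).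
      { unfold supnorm. apply (proj1 (Lub_Rbar_correct _)). exists x. split; auto. }
      destruct (omega4 (ff2 M) 1) as [w| |] eqn:Ew; simpl in Hom, Hom0; try contradiction.
      assert (H2 := Rbar_le_trans _ _ _ H1 Hle). simpl in H2. unfold D.
      apply Rmult_le_compat_l with (r := A) in Hom; lra. }
    clear Hle.
    set (c' := trunc n c).
    assert (HP : forall x, poly_eval N c' x = poly_eval n c x).
    { intros x. unfold N, c'. rewrite Nat.add_comm. apply trunc_eval. }
    set (r := fun k => c' k - Fc M k).
    assert (HR : forall x, poly_eval N r x = poly_eval n c x - (x^5 - M*x^3)).
    { intros x. rewrite <- HP. unfold N. rewrite <- (Fc_eval M n x). unfold poly_eval.
      rewrite <- minus_sum. apply sum_eq. intros i _. unfold r. ring. }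
    set (B := K * (D + M^2)).
    assert (Hr : forall k, (k <= N)%nat -> Rabs (r k) <= B).
    { apply HKb. intros x Hx. rewrite HR.
      replace (poly_eval n c x - (x ^ 5 - M * x ^ 3)) with
        (- (ff M x - poly_eval n c x) + (ff M x - (x^5 - M*x^3))) by ring.
      rewrite ff_F by auto.
      eapply Rle_trans; [apply Rabs_triang|]. rewrite Rabs_Ropp.
      pose proof (HD x Hx). pose proof (E_bound M x HM Hx). lra. }
    assert (HB : 0 <= B).
    { unfold B. apply Rmult_le_pos; [lra|]. unfold D. assert (0 < m^3) by (apply pow_lt; lra).
      assert (0 <= M^2) by (apply pow_le; lra). nra. }
    assert (Hc1 : c' 1%nat = 0).
    { assert (Hd' : is_derive (poly_eval N c') 0 (ff1 M 0)).
      { apply (is_derive_ext (poly_eval n c)). intros; symmetry; apply HP. apply is_derive_Reals; auto. }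
      assert (Hd2 := poly_deriv0 (4 + n) c'). change (S (4 + n)) with N in Hd2.
      apply is_derive_unique in Hd'. apply is_derive_unique in Hd2. rewrite Hd' in Hd2.
      rewrite <- Hd2. unfold ff1. field. lra. }
    set (S0 := INR (S N) * (B + 1)).
    assert (HS0 : 1 <= S0).
    { unfold S0. assert (1 <= INR (S N)) by (apply (le_INR 1); lia). nra. }
    assert (Hsum : sum_f_R0 (fun k => Rabs (c' k)) N <= S0).
    { unfold S0. rewrite Rmult_comm, <- sum_cte. apply sum_Rle. intros k Hk.
      replace (c' k) with (r k + Fc M k) by (unfold r; ring).
      eapply Rle_trans; [apply Rabs_triang|]. pose proof (Hr k Hk). pose proof (Fc_abs M k ltac:(lra)). lra. }
    set (x0 := M / (2 * S0)).
    assert (Hx0 : 0 < x0) by (unfold x0; apply Rdiv_lt_0_compat; lra).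
    assert (Hx0S : x0 * S0 = M / 2) by (unfold x0; field; lra).
    assert (Hx01 : x0 <= 1).
    { assert (x0 * S0 <= 1 * S0) by lra. nra. }
    assert (Hodd := odd_part c' x0 (2 + n) Hc1 ltac:(lra)).
    change (3 + (2 + n))%nat with N in Hodd.
    rewrite !HP in Hodd.
    assert (Hp1 := Hpos x0 ltac:(lra)). assert (Hp2 := Hneg (- x0) ltac:(lra)).
    set (Sg := sum_f_R0 (fun k => Rabs (c' k)) N) in *.
    assert (Hc3 : c' 3%nat + x0 * Sg >= 0).
    { assert (0 < x0^3) by (apply pow_lt; lra).
      assert (0 <= 2 * x0^3 * (c' 3%nat + x0 * Sg)).
      { replace (2 * x0^3 * (c' 3%nat + x0 * Sg)) with (2 * c' 3%nat * x0 ^ 3 + 2 * x0 ^ 4 * Sg) by ring.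
        lra. }
      nra. }
    assert (Hxs : x0 * Sg <= M / 2) by (rewrite <- Hx0S; apply Rmult_le_compat_l; lra).
    assert (Hr3 : M / 2 <= r 3%nat) by (unfold r; simpl Fc; lra).
    assert (Hr3' := Hr 3%nat ltac:(unfold N; lia)).
    assert (Hab : r 3%nat <= B) by (eapply Rle_trans; [apply Rle_abs|exact Hr3']).
    assert (Hcon : m * m / 2 <= K * (48 * A * m^3 + m^4)).
    { replace (K * (48 * A * m^3 + m^4)) with B by (unfold B, D, M; ring). fold M. lra. }
    assert (Hle2 : K * (48 * A * m^3 + m^4) <= m * m * (m * t)).
    { unfold t. assert (m^4 <= m^3) by (replace (m^4) with (m^3 * m) by ring; assert (0 < m^3) by (apply pow_lt; lra); nra).
      replace (m * m * (m * (K * (48 * A + 1)))) with (K * (48 * A * m^3 + m^3)) by ring.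
      apply Rmult_le_compat_l; lra. }
    assert (Hmt' : m * t < 1 / 2) by nra.
    assert (0 < m * m) by nra. nra.
Qed.
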